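(* Let $A$ be an integral residuated $\vee$-semilattice. Then: (1) if $A$ is a $\to$-MTL-algebra, the $\to$-prime filters of $A$ are exactly the $\vee$-prime filters of $A$; (2) if $A$ is a $\leadsto$-MTL-algebra, the $\leadsto$-prime filters of $A$ are exactly the $\vee$-prime filters of $A$; (3) if $A$ is a pseudo MTL-algebra, the prime filters of $A$ are exactly the $\vee$-prime filters of $A$.
   Context: A residuated poset is a partially ordered semigroup $(A;\cdot,\le)$ with binary operations $\to,\leadsto$ such that $x\cdot y\le z$ iff $x\le y\to z$ iff $y\le x\leadsto z$. It is a residuated $\vee$-semilattice if $(A,\le)$ is a join-semilattice, and integral if it has a greatest element $1$ that is a multiplicative identity. A filter is a nonempty upward closed subset closed under $\cdot$. A filter $F$ is $\to$-prime if for all $x,y$, $x\to y\in F$ or $y\to x\in F$; $\leadsto$-prime if for all $x,y$, $x\leadsto y\in F$ or $y\leadsto x\in F$; prime if both; $\vee$-prime if $x\vee y\in F$ implies $x\in F$ or $y\in F$. $A$ is a $\to$-MTL-algebra if $(x\to y)\vee(y\to x)=1$ for all $x,y$; a $\leadsto$-MTL-algebra if $(x\leadsto y)\vee(y\leadsto x)=1$ for all $x,y$; a pseudo MTL-algebra if both. *)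

(* Defs.v *)
Set Implicit Arguments.

Record IRJSL := {
  car :> Type;
  le : car -> car -> Prop;
  mul : car -> car -> car;
  imp : car -> car -> car;    (* -> *)
  limp : car -> car -> car;   (* ~> *)
  join : car -> car -> car;
  one : car;
  le_refl : forall x, le x x;
  le_antisym : forall x y, le x y -> le y x -> x = y;
  le_trans : forall x y z, le x y -> le y z -> le x z;
  mul_assoc : forall x y z, mul (mul x y) z = mul x (mul y z);
  mul_monol : forall x y z, le x y -> le (mul x z) (mul y z);
  mul_monor : forall x y z, le x y -> le (mul z x) (mul z y);
  residuation_imp : forall x y z, le (mul x y) z <-> le x (imp y z);
  residuation_limp : forall x y z, le (mul x y) z <-> le y (limp x z);
  join_ubl : forall x y, le x (join x y);
  join_ubr : forall x y, le y (join x y);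
  join_lub : forall x y z, le x z -> le y z -> le (join x y) z;
  one_top : forall x, le x one;
  mul_1l : forall x, mul one x = x;
  mul_1r : forall x, mul x one = x
}.

Section Defs.
Variable A : IRJSL.

Definition is_filter (F : A -> Prop) : Prop :=
  (exists x, F x) /\
  (forall x y, F x -> le A x y -> F y) /\
  (forall x y, F x -> F y -> F (mul A x y)).

Definition imp_prime (F : A -> Prop) : Prop :=
  forall x y, F (imp A x y) \/ F (imp A y x).

Definition limp_prime (F : A -> Prop) : Prop :=
  forall x y, F (limp A x y) \/ F (limp A y x).

Definition prime (F : A -> Prop) : Prop := imp_prime F /\ limp_prime F.

Definition join_prime (F : A -> Prop) : Prop :=
  forall x y, F (join A x y) -> F x \/ F y.

Definition imp_MTL : Prop :=
  forall x y, join A (imp A x y) (imp A y x) = one A.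
Definition limp_MTL : Prop :=
  forall x y, join A (limp A x y) (limp A y x) = one A.
Definition pseudo_MTL : Prop := imp_MTL /\ limp_MTL.

End Defs.
Arguments is_filter {A} F.
Arguments imp_prime {A} F.
Arguments limp_prime {A} F.
Arguments prime {A} F.
Arguments join_prime {A} F.

(* Main.v *)
Require Import Defs.

Section L.
Variable A : IRJSL.

Lemma mul_le_l (z x : A) : le A (mul A z x) x.
Proof.
  pose proof (mul_monol A _ _ x (one_top A z)) as H. rewrite mul_1l in H. exact H.
Qed.

Lemma mul_le_r (z x : A) : le A (mul A x z) x.
Proof.
  pose proof (mul_monor A _ _ x (one_top A z)) as H. rewrite mul_1r in H. exact H.
Qed.

Lemma imp_join (x y : A) : le A (mul A (imp A x y) (join A x y)) y.
Proof.
  apply residuation_limp. apply join_lub.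
  - apply residuation_limp. apply residuation_imp. apply le_refl.
  - apply residuation_limp. apply mul_le_l.
Qed.

Lemma limp_join (x y : A) : le A (mul A (join A x y) (limp A x y)) y.
Proof.
  apply residuation_imp. apply join_lub.
  - apply residuation_imp. apply residuation_limp. apply le_refl.
  - apply residuation_imp. apply mul_le_r.
Qed.

Lemma imp_jp (F : A -> Prop) : is_filter F -> imp_prime F -> join_prime F.
Proof.
  intros [_ [Hup Hmul]] H x y Hxy.
  destruct (H x y) as [H1|H1].
  - right. eapply Hup. apply Hmul; [exact H1|exact Hxy]. apply imp_join.
  - left. eapply Hup. apply Hmul; [exact H1|]. 2: apply imp_join.
    assert (E : join A x y = join A y x).
    { apply le_antisym; apply join_lub; (apply join_ubl || apply join_ubr). }
    rewrite <- E; exact Hxy.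
Qed.

Lemma limp_jp (F : A -> Prop) : is_filter F -> limp_prime F -> join_prime F.
Proof.
  intros [_ [Hup Hmul]] H x y Hxy.
  destruct (H x y) as [H1|H1].
  - right. eapply Hup. apply Hmul; [exact Hxy|exact H1]. apply limp_join.
  - left. eapply Hup. apply Hmul; [|exact H1]. 2: apply limp_join.
    assert (E : join A x y = join A y x).
    { apply le_antisym; apply join_lub; (apply join_ubl || apply join_ubr). }
    rewrite <- E; exact Hxy.
Qed.

Lemma one_in (F : A -> Prop) : is_filter F -> F (one A).
Proof.
  intros [[z Hz] [Hup _]]. eapply Hup. exact Hz. apply one_top.
Qed.

Lemma jp_imp (F : A -> Prop) : imp_MTL A -> is_filter F -> join_prime F -> imp_prime F.
Proof.
  intros M Hf H x y. apply H. rewrite M. apply one_in; auto.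
Qed.

Lemma jp_limp (F : A -> Prop) : limp_MTL A -> is_filter F -> join_prime F -> limp_prime F.
Proof.
  intros M Hf H x y. apply H. rewrite M. apply one_in; auto.
Qed.
End L.

Theorem lemma5p4 (A : IRJSL) :
  (imp_MTL A ->
     forall F : A -> Prop, is_filter F -> (imp_prime F <-> join_prime F)) /\
  (limp_MTL A ->
     forall F : A -> Prop, is_filter F -> (limp_prime F <-> join_prime F)) /\
  (pseudo_MTL A ->
     forall F : A -> Prop, is_filter F -> (prime F <-> join_prime F)).
Proof.
  split; [|split].
  - intros M F Hf. split; [apply imp_jp; auto | apply jp_imp; auto].
  - intros M F Hf. split; [apply limp_jp; auto | apply jp_limp; auto].
  - intros [M1 M2] F Hf. split.
    + intros [H _]. apply imp_jp; auto.
    + intros H. split; [apply jp_imp | apply jp_limp]; auto.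
Qed.
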